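(* Let $L$ be a positive integer and let $(\mathbf{F},\mathbf{G})$ be an eigencomplementary pair of matrices $\mathbf{F},\mathbf{G}\in\mathbb{R}^{L\times L}$. Then: (1) if $\mathbf{F}$ is regular (invertible), then $\mathbf{F}^{-1}\mathbf{G}$ is negative semi-definite; (2) if $\mathbf{G}$ is regular, then $\mathbf{F}\mathbf{G}^{-1}$ is negative semi-definite.
   Context: A pair $(\mathbf{F},\mathbf{G})$ of real symmetric $L\times L$ matrices is called eigencomplementary if $\mathbf{F}$ is negative semi-definite, $\mathbf{G}$ is positive semi-definite, $\mathbf{F}$ and $\mathbf{G}$ have a common basis of eigenvectors of $\mathbb{R}^L$, and, in the case that $\mathbf{F}$ and $\mathbf{G}$ are both singular, additionally $\bigoplus_{\xi\in\sigma(\mathbf{F}),\,\xi<0}\operatorname{Eig}_{\mathbf{F}}(\xi)=\operatorname{Eig}_{\mathbf{G}}(0)$, where $\sigma(\cdot)$ denotes the spectrum and $\operatorname{Eig}_{\mathbf{M}}(\xi)$ the eigenspace of $\mathbf{M}$ for the eigenvalue $\xi$. *)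

(* Defs.v *)
(* real numbers rendered as an arbitrary real closed field. *)
From HB Require Import structures.
From mathcomp Require Import all_boot all_order all_algebra.
From mathcomp Require Import polyrcf.
Set Implicit Arguments. Unset Strict Implicit. Unset Printing Implicit Defensive.
Import Order.TTheory GRing.Theory Num.Theory.
Local Open Scope ring_scope.

Section Defs.
Variable R : rcfType.

Definition symmetric_mx L (A : 'M[R]_L) : Prop := A^T = A.

Definition psd_mx L (A : 'M[R]_L) : Prop :=
  symmetric_mx A /\ forall v : 'cV[R]_L, 0 <= (v^T *m A *m v) 0 0.
Definition nsd_mx L (A : 'M[R]_L) : Prop :=
  symmetric_mx A /\ forall v : 'cV[R]_L, (v^T *m A *m v) 0 0 <= 0.

Definition spectrum L (A : 'M[R]_L) : seq R := rootsR (char_poly A).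

(* a common basis of eigenvectors of R^L: the rows of an invertible matrix P,
   each of which is an eigenvector of both F and G *)
Definition common_eigenbasis L (F G : 'M[R]_L) : Prop :=
  exists P : 'M[R]_L, P \in unitmx /\
    forall i : 'I_L, exists a b : R,
      row i P *m F = a *: row i P /\ row i P *m G = b *: row i P.

Definition neg_eigensum L (F : 'M[R]_L) : 'M[R]_L :=
  (\sum_(xi <- spectrum F | (xi < 0)%R) eigenspace F xi)%MS.

Definition eigencomplementary L (F G : 'M[R]_L) : Prop :=
  [/\ symmetric_mx F /\ symmetric_mx G, nsd_mx F, psd_mx G,
      common_eigenbasis F G &
      (F \notin unitmx -> G \notin unitmx ->
         (neg_eigensum F == eigenspace G 0)%MS)].
End Defs.

(* Main.v *)
Require Import Defs.
From HB Require Import structures.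
From mathcomp Require Import all_boot all_order all_algebra.
From mathcomp Require Import polyrcf.
From Stdlib Require Import ClassicalEpsilon.
Import Order.TTheory GRing.Theory Num.Theory.
Local Open Scope ring_scope.

Lemma nsd_of_eig (R : rcfType) L (X P : 'M[R]_L) (e : 'I_L -> R) :
  X^T = X -> P \in unitmx -> (forall i, row i P *m X = e i *: row i P) ->
  (forall i, e i <= 0) -> forall v : 'cV[R]_L, (v^T *m X *m v) 0 0 <= 0.
Proof.
move=> sX uP hrow hneg v.
set D := diag_mx (\row_i e i).
have PX : P *m X = D *m P.
  apply/row_matrixP => i; rewrite row_mul hrow mul_diag_mx.
  by apply/rowP => j; rewrite !mxE.
set M := P *m P^T.
have sM : M^T = M by rewrite /M trmx_mul trmxK.
have DM : D *m M = M *m D.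
  have h1 : D *m M = P *m X *m P^T by rewrite PX /M mulmxA.
  have : (D *m M)^T = D *m M by rewrite h1 !trmx_mul trmxK sX mulmxA.
  by rewrite trmx_mul sM tr_diag_mx => ->.
have entry : forall i j, e i * M i j = M i j * e j.
  move=> i j; move/matrixP: DM => /(_ i j).
  by rewrite mul_diag_mx mul_mx_diag !mxE.
set S := diag_mx (\row_i Num.sqrt (- e i)).
have DMS : D *m M = - (S *m M *m S).
  move: (M) entry => N entry.
  apply/matrixP => i j; rewrite mul_diag_mx mul_mx_diag mul_diag_mx !mxE.
  have [->|nz] := eqVneq (N i j) 0; first by rewrite !mulr0 mul0r oppr0.
  have eij : e i = e j by apply: (mulIf nz); rewrite entry mulrC.
  by rewrite eij mulrAC -expr2 sqr_sqrtr ?oppr_ge0 // mulNr opprK.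
set c := v^T *m invmx P.
have hv : v^T = c *m P by rewrite /c -mulmxA mulVmx // mulmx1.
have hv' : v = P^T *m c^T by rewrite -trmx_mul -hv trmxK.
set u := c *m S *m P.
have : v^T *m X *m v = - (u *m u^T).
  rewrite {1}hv hv' !mulmxA -(mulmxA c P X) PX mulmxA -(mulmxA _ P) -/M.
  rewrite -(mulmxA c D M) DMS /u !trmx_mul tr_diag_mx.
  by rewrite mulmxN mulNmx !mulmxA.
move=> ->; rewrite mxE oppr_le0 mxE; apply: sumr_ge0 => k _.
by rewrite [u^T _ _]mxE -expr2 sqr_ge0.
Qed.


Lemma row_unit_neq0 (R : rcfType) L (P : 'M[R]_L) i :
  P \in unitmx -> row i P != 0.
Proof.
move=> uP; apply/eqP => h.
have : row i (P *m invmx P) = row i (1%:M : 'M[R]_L) by rewrite mulmxV.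
rewrite row_mul h mul0mx => /rowP /(_ i); rewrite !mxE eqxx /=.
by move/eqP; rewrite eq_sym oner_eq0.
Qed.

Lemma sqnorm_gt0 (R : rcfType) L (p : 'rV[R]_L) : p != 0 -> 0 < (p *m p^T) 0 0.
Proof.
move=> nz; rewrite mxE lt0r sumr_ge0 ?andbT; last first.
  by move=> k _; rewrite mxE -expr2 sqr_ge0.
apply: contra nz => /eqP /psumr_eq0P h.
have {}h := h (fun k _ => ltac:(by rewrite mxE -expr2 sqr_ge0)).
apply/eqP/rowP => k; rewrite mxE.
have := h k isT; rewrite mxE.
by move/eqP; rewrite mulf_eq0 orbb => /eqP.
Qed.

Lemma quad_row (R : rcfType) L (A : 'M[R]_L) (p : 'rV[R]_L) a :
  p *m A = a *: p -> ((p^T)^T *m A *m p^T) 0 0 = a * (p *m p^T) 0 0.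
Proof. by move=> h; rewrite trmxK h -scalemxAl mxE. Qed.

Lemma nsd_eig (R : rcfType) L (A : 'M[R]_L) (p : 'rV[R]_L) a :
  nsd_mx A -> p != 0 -> p *m A = a *: p -> a <= 0.
Proof.
move=> [_ hA] nz h; have := hA p^T; rewrite (@quad_row _ _ _ _ _ h).
by rewrite pmulr_lle0 // sqnorm_gt0.
Qed.

Lemma psd_eig (R : rcfType) L (A : 'M[R]_L) (p : 'rV[R]_L) a :
  psd_mx A -> p != 0 -> p *m A = a *: p -> 0 <= a.
Proof.
move=> [_ hA] nz h; have := hA p^T; rewrite (@quad_row _ _ _ _ _ h).
by rewrite pmulr_lge0 // sqnorm_gt0.
Qed.

Lemma eig_inv (R : rcfType) L (A : 'M[R]_L) (p : 'rV[R]_L) a :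
  A \in unitmx -> p != 0 -> p *m A = a *: p ->
  a != 0 /\ p *m invmx A = a^-1 *: p.
Proof.
move=> uA nz h.
have ha : a != 0.
  apply: contra nz => /eqP a0; apply/eqP.
  by rewrite -(mulmxK uA p) h a0 scale0r mul0mx.
split => //.
by rewrite -{2}(mulmxK uA p) h -scalemxAl scalerA mulVf // scale1r.
Qed.

Lemma comm_of_eig (R : rcfType) L (P A B : 'M[R]_L) (a b : 'I_L -> R) :
  P \in unitmx -> (forall i, row i P *m A = a i *: row i P) ->
  (forall i, row i P *m B = b i *: row i P) -> A *m B = B *m A.
Proof.
move=> uP ha hb.
have hd : forall (c : 'I_L -> R) (C : 'M[R]_L), (forall i, row i P *m C = c i *: row i P) ->
   C = invmx P *m diag_mx (\row_i c i) *m P.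
  move=> c C hc; rewrite -mulmxA; apply: (canRL (mulKmx uP)).
  apply/row_matrixP => i; rewrite row_mul hc mul_diag_mx.
  by apply/rowP => j; rewrite !mxE.
rewrite (hd _ _ ha) (hd _ _ hb). rewrite !mulmxA !(mulmxK uP) -!mulmxA.
have Dc : diag_mx (\row_i a i) *m diag_mx (\row_i b i) = diag_mx (\row_i b i) *m diag_mx (\row_i a i).
  rewrite mul_diag_mx mul_mx_diag.
  by apply/matrixP => i j; rewrite !mxE; case: eqP => [->|]; rewrite ?mulr0n ?mulr0 ?mul0r ?mulr1n // mulrC.
by rewrite (mulmxA (diag_mx (\row_i a i))) Dc -mulmxA.
Qed.

Lemma comm_inv (R : rcfType) L (A B : 'M[R]_L) :
  A \in unitmx -> A *m B = B *m A -> invmx A *m B = B *m invmx A.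
Proof.
move=> uA h.
apply: (canRL (mulmxK uA)).
by rewrite -mulmxA -h mulmxA mulVmx // mul1mx.
Qed.

Theorem lemma2p5 (R : rcfType) (L : nat) (hL : (0 < L)%N) (F G : 'M[R]_L) :
  eigencomplementary F G ->
  (F \in unitmx -> nsd_mx (invmx F *m G)) /\
  (G \in unitmx -> nsd_mx (F *m invmx G)).
Proof.
move=> [[sF sG] nF pG [P [uP hP]] _].
pose a i := proj1_sig (constructive_indefinite_description _ (hP i)).
have hb i : exists b, row i P *m F = a i *: row i P /\ row i P *m G = b *: row i P.
  exact: (proj2_sig (constructive_indefinite_description _ (hP i))).
pose b i := proj1_sig (constructive_indefinite_description _ (hb i)).
have hab i : row i P *m F = a i *: row i P /\ row i P *m G = b i *: row i P.
  exact: (proj2_sig (constructive_indefinite_description _ (hb i))).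
have hF i : row i P *m F = a i *: row i P by case: (hab i).
have hG i : row i P *m G = b i *: row i P by case: (hab i).
have nz i : row i P != 0 by apply: row_unit_neq0.
have aneg i : a i <= 0 by exact: (@nsd_eig _ _ _ _ _ nF (nz i) (hF i)).
have bpos i : 0 <= b i by exact: (@psd_eig _ _ _ _ _ pG (nz i) (hG i)).
have cFG : F *m G = G *m F by exact: (@comm_of_eig _ _ _ _ _ _ _ uP hF hG).
split.
- move=> uF.
  have cI := @comm_inv _ _ _ _ uF cFG.
  have sX : (invmx F *m G)^T = invmx F *m G by rewrite trmx_mul trmx_inv sF sG cI.
  split => //.
  apply: (@nsd_of_eig _ _ _ P (fun i => (a i)^-1 * b i)) => // [i|i].
    have [_ hi] := @eig_inv _ _ _ _ _ uF (nz i) (hF i).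
    by rewrite mulmxA hi -scalemxAl hG scalerA.
  by rewrite mulr_le0_ge0 // invr_le0.
- move=> uG.
  have cI := @comm_inv _ _ _ _ uG (esym cFG).
  have sX : (F *m invmx G)^T = F *m invmx G by rewrite trmx_mul trmx_inv sF sG cI.
  split => //.
  apply: (@nsd_of_eig _ _ _ P (fun i => (b i)^-1 * a i)) => // [i|i].
    have [_ hi] := @eig_inv _ _ _ _ _ uG (nz i) (hG i).
    by rewrite mulmxA hF -scalemxAl hi scalerA mulrC.
  by rewrite mulr_ge0_le0 // invr_ge0.
Qed.
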